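(* Let $d\ge2$, $\varepsilon\in(0,1)$, $c\in\{1,2,\dots\}\cup\{\infty\}$, and let $W$ be the gap process of the $d$-ball SBBS. Let $\gamma=\min\{t\in\mathbb Z_{\ge0}: W^i_t\ge1\text{ for all }1\le i\le d-1\}$. Then for every $x\in\mathbb Z^{d-1}_{\ge0}$, $\mathbb E[\gamma\mid W_0=x]<\infty$.
   Context: Stochastic box-ball system (SBBS). Fix an error probability $\varepsilon\in[0,1]$ and a capacity $c\in\{1,2,\dots\}\cup\{\infty\}$. A configuration is $\zeta\in\{0,1\}^{\mathbb N}$, $\mathbb N=\{1,2,\dots\}$, with finitely many $1$'s (balls). Given $\zeta$, the stochastic carrier process $\Gamma$ is defined by $\Gamma(0)=0$ and recursively (with fresh independent randomness at each $k$): $\Gamma(k)=\Gamma(k-1)+1$ with probability $1-\varepsilon$ (and $\Gamma(k)=\Gamma(k-1)$ otherwise) if $\zeta(k)=1$ and $\Gamma(k-1)<c$; $\Gamma(k)=\Gamma(k-1)-1$ if $\zeta(k)=0$ and $\Gamma(k-1)\ge1$; $\Gamma(k)=\Gamma(k-1)$ otherwise. The new configuration is $\zeta'(k)=\mathbf 1(\Gamma(k)-\Gamma(k-1)=-1)+\mathbf 1(\Gamma(k)=\Gamma(k-1),\ \zeta(k)=1)$. Iterating independently gives the SBBS trajectory $(\zeta_t)_{t\in\mathbb Z_{\ge0}}$. The number $d$ of balls is conserved; $\zeta^{(1)}_t<\dots<\zeta^{(d)}_t$ denote the ball positions. The gap process is $W_t=(W^1_t,\dots,W^{d-1}_t)$,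 $W^i_t=\zeta^{(i+1)}_t-\zeta^{(i)}_t-1$; it is a time-homogeneous Markov chain on $\mathbb Z^{d-1}_{\ge0}$ whose law depends only on $W_0$. *)

(* Defs.v *)
From HB Require Import structures.
From mathcomp Require Import all_boot all_order all_algebra.
From mathcomp Require Import boolp classical_sets reals constructive_ereal ereal sequences.
Set Implicit Arguments. Unset Strict Implicit. Unset Printing Implicit Defensive.
Import Order.TTheory GRing.Theory Num.Theory.

(* A configuration is zeta : nat -> bool; site 0 is unused (N = {1,2,...}). *)
(* Capacity c : option nat, None standing for c = infinity. *)

Definition below_cap (c : option nat) (g : nat) : bool :=
  if c is Some n then (g < n)%N else true.

Definition rank (zeta : nat -> bool) (k : nat) : nat := (\sum_(1 <= j < k) zeta j)%N.

Definition is_config (d : nat) (zeta : nat -> bool) : Prop :=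
  zeta 0 = false /\
  exists N, (forall k, (N < k)%N -> zeta k = false) /\ rank zeta N.+1 = d.

(* Carrier process driven by coins: omega r is the coin attached to the ball of
   rank r (0-indexed); omega r = true means "picked up" (probability 1 - eps). *)
Fixpoint carrier (c : option nat) (zeta : nat -> bool) (omega : nat -> bool)
    (k : nat) : nat :=
  match k with
  | 0 => 0
  | k'.+1 =>
      let g := carrier c zeta omega k' in
      if zeta k'.+1 then
        (if below_cap c g then g + omega (rank zeta k'.+1) else g)
      else g.-1
  end.

Definition sbbs_step (c : option nat) (zeta : nat -> bool) (omega : nat -> bool)
    : nat -> bool :=
  fun k => (k != 0%N) &&
    ((carrier c zeta omega k.-1 == (carrier c zeta omega k).+1)
     || ((carrier c zeta omega k == carrier c zeta omega k.-1) && zeta k)).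

(* trajectory driven by the coin family h s r (time s, ball rank r) *)
Fixpoint traj (c : option nat) (zeta0 : nat -> bool) (h : nat -> nat -> bool)
    (t : nat) : nat -> bool :=
  match t with
  | 0 => zeta0
  | t'.+1 => sbbs_step c (traj c zeta0 h t') (h t')
  end.

(* position of the ball of rank i (0-indexed): zeta^{(i+1)} in the paper *)
Definition pos (zeta : nat -> bool) (i : nat) : nat :=
  xget 0%N [set k | zeta k /\ rank zeta k = i].

(* gap i (0-indexed) = W^{i+1} = zeta^{(i+2)} - zeta^{(i+1)} - 1 *)
Definition gap (zeta : nat -> bool) (i : nat) : nat :=
  (pos zeta i.+1 - pos zeta i - 1)%N.

Definition all_gaps_pos (d : nat) (zeta : nat -> bool) : bool :=
  [forall i : 'I_d.-1, (1 <= gap zeta i)%N].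

Definition coins_of (t d : nat) (h : {ffun 'I_t -> {ffun 'I_d -> bool}})
    : nat -> nat -> bool :=
  fun s r => match insub s, insub r with
             | Some s', Some r' => h s' r'
             | _, _ => false
             end.

Definition coin_weight (R : realType) (eps : R) (t d : nat)
    (h : {ffun 'I_t -> {ffun 'I_d -> bool}}) : R :=
  \prod_(s < t) \prod_(r < d) (if h s r then 1 - eps else eps).

Definition gamma_event (d : nat) (c : option nat) (zeta0 : nat -> bool)
    (h : nat -> nat -> bool) (t : nat) : bool :=
  [forall s : 'I_t, ~~ all_gaps_pos d (traj c zeta0 h s)]
  && all_gaps_pos d (traj c zeta0 h t).

Definition prob_gamma (R : realType) (eps : R) (d : nat) (c : option nat)
    (zeta0 : nat -> bool) (t : nat) : R :=
  \sum_(h : {ffun 'I_t -> {ffun 'I_d -> bool}})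
     (coin_weight eps h * (gamma_event d c zeta0 (coins_of h) t)%:R).

Local Open Scope ereal_scope.
(* E[gamma] = sum_t t P(gamma = t) + (+oo) * P(gamma = +oo)  (with +oo * 0 = 0) *)
Definition expect_gamma (R : realType) (eps : R) (d : nat) (c : option nat)
    (zeta0 : nat -> bool) : \bar R :=
  \sum_(0 <= t <oo) ((t%:R * prob_gamma eps d c zeta0 t)%R)%:E
  + +oo * (1 - \sum_(0 <= t <oo) (prob_gamma eps d c zeta0 t)%:E).

(* Main.v *)
Require Import Defs.
From HB Require Import structures.
From mathcomp Require Import all_boot all_order all_algebra.
From mathcomp Require Import boolp classical_sets reals constructive_ereal ereal sequences.
Import Order.TTheory GRing.Theory Num.Theory.
From mathcomp Require Import zify ring lra.

Module M1.

Lemma rank0 z : rank z 0 = 0%N.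
Proof. by rewrite /rank big_geq. Qed.
Lemma rank1 z : rank z 1 = 0%N.
Proof. by rewrite /rank big_geq. Qed.

Lemma rankS z k : z 0 = false -> rank z k.+1 = (rank z k + z k)%N.
Proof.
move=> z0; case: k => [|k]; first by rewrite rank0 rank1 z0.
by rewrite /rank big_nat_recr.
Qed.

Lemma rank_mono z m n : (m <= n)%N -> (rank z m <= rank z n)%N.
Proof.
move=> mn; rewrite /rank; case: (leqP m 1) => m1.
  by rewrite (@big_geq _ _ _ 1 m).
rewrite (@big_cat_nat _ _ _ m 1 n) //=; [exact: leq_addr|exact: ltnW].
Qed.

Arguments rank_mono z {m n}.

Lemma carrier0 c z w : carrier c z w 0 = 0%N.
Proof. by []. Qed.

Lemma carrierS c z w k : carrier c z w k.+1 =
  if z k.+1 then (if below_cap c (carrier c z w k) then carrier c z w k + w (rank z k.+1) else carrier c z w k)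
  else (carrier c z w k).-1.
Proof. by []. Qed.

Lemma stepS c z w k : sbbs_step c z w k.+1 =
  (carrier c z w k == (carrier c z w k.+1).+1)
     || ((carrier c z w k.+1 == carrier c z w k) && z k.+1).
Proof. by []. Qed.

Lemma step0 c z w : sbbs_step c z w 0 = false.
Proof. by []. Qed.

Lemma conserve c z w k : z 0 = false ->
  (rank (sbbs_step c z w) k.+1 + carrier c z w k = rank z k.+1)%N.
Proof.
move=> z0; elim: k => [|k IH]; first by rewrite !rank1.
rewrite (rankS (sbbs_step c z w)) // (rankS z) // -IH stepS carrierS.
case: (z k.+1); [case: below_cap; [case: (w _)|]|];
 case: (carrier c z w k) => [|g] /=; rewrite ?eqxx /=; lia.
Qed.

Lemma carrier_le c z w k : (carrier c z w k <= k)%N.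
Proof.
elim: k => [//|k IH]; rewrite carrierS.
case: (z k.+1); [case: below_cap; [case: (w _)|]|] => /=; lia.
Qed.

Lemma carrier_tail c z w N j : (forall k, (N < k)%N -> z k = false) ->
  carrier c z w (N + j) = (carrier c z w N - j)%N.
Proof.
move=> zN; elim: j => [|j IH]; first by rewrite addn0 subn0.
rewrite addnS carrierS zN; last by lia.
rewrite IH; lia.
Qed.

Lemma rank_tail z N j : (forall k, (N < k)%N -> z k = false) -> z 0 = false ->
  rank z (N.+1 + j) = rank z N.+1.
Proof.
move=> zN z0; elim: j => [|j IH]; first by rewrite addn0.
by rewrite addnS rankS // IH zN //; lia.
Qed.

Lemma step_config c z w d : is_config d z -> is_config d (sbbs_step c z w).
Proof.
move=> [z0 [N [zN rN]]]; split; first by [].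
exists (N + N)%N; split.
  case=> [//|k] Hk; rewrite stepS.
  have e1 : carrier c z w k = 0%N.
    have -> : k = (N + (k - N))%N by lia.
    rewrite carrier_tail //; move: (carrier_le c z w N); lia.
  have e2 : carrier c z w k.+1 = 0%N.
    have -> : k.+1 = (N + (k.+1 - N))%N by lia.
    rewrite carrier_tail //; move: (carrier_le c z w N); lia.
  by rewrite e1 e2 zN //; lia.
have := @conserve c z w (N + N) z0.
have -> : carrier c z w (N + N) = 0%N.
  by rewrite carrier_tail //; move: (carrier_le c z w N); lia.
rewrite addn0 => ->.
have -> : (N + N).+1 = (N.+1 + N)%N by lia.
by rewrite rank_tail.
Qed.

Definition Sep (z : nat -> bool) (i : nat) := forall k, z k -> z k.+1 -> (rank z k < i)%N.
Definition T (z : nat -> bool) (i k : nat) : bool := z k && (i <= rank z k)%N.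

Section Pattern.
Variables (c : option nat) (z w : nat -> bool) (i : nat).
Hypothesis z0 : z 0 = false.
Hypothesis hc : below_cap c 0.
Hypothesis hs : Sep z i.
Hypothesis hw : forall k, z k -> w (rank z k) = (i <= rank z k)%N.

Lemma T_next k : T z i k -> z k.+1 = false.
Proof.
rewrite /T => /andP[zk ik]; apply/negP => zk1.
by have := hs k zk zk1; rewrite ltnNge ik.
Qed.

Lemma pat_carrier k : carrier c z w k = T z i k.
Proof.
elim: k => [|k IH]; first by rewrite /T z0.
rewrite carrierS IH.
case zk1: (z k.+1).
  case Tk: (T z i k); first by rewrite T_next in zk1.
  by rewrite /= hc add0n hw ?zk1 // /T zk1.
by rewrite {2}/T zk1 /=; case: (T z i k).
Qed.

Lemma pat_step k : sbbs_step c z w k.+1 = T z i k || (z k.+1 && ~~ T z i k.+1).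
Proof.
rewrite stepS !pat_carrier.
case Tk: (T z i k).
  by have := T_next _ Tk; rewrite /T => ->.
by case: (T z i k.+1); case: (z k.+1).
Qed.

Lemma pat_rank k : rank (sbbs_step c z w) k.+1 = (rank z k.+1 - T z i k)%N.
Proof.
elim: k => [|k IH]; first by rewrite !rank1.
rewrite rankS // IH pat_step (rankS z k.+1) // (rankS z k) //.
case Tk: (T z i k).
  have zk1 := T_next _ Tk.
  have Tk1 : T z i k.+1 = false by rewrite /T zk1.
  have /andP[zk _] := Tk.
  rewrite Tk1 zk1 zk /=; lia.
rewrite /=; case Tk1': (T z i k.+1).
  by have /andP[-> _] := Tk1'; rewrite /=; lia.
by case: (z k.+1) => /=; lia.
Qed.

Lemma pat_sep : (1 <= i)%N -> Sep (sbbs_step c z w) i.-1.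
Proof.
move=> i1 [//|k] sk sk1.
move: sk1; rewrite pat_step => /orP[Tk1|/andP[zk2 nT]].
  move: sk; rewrite pat_step => /orP[Tk|/andP[_ nT]].
    by move: Tk1; rewrite /T (T_next _ Tk).
  by rewrite Tk1 in nT.
have r2 : (rank z k.+2 < i)%N by move: nT; rewrite /T zk2 /= -ltnNge.
rewrite pat_rank.
move: sk; rewrite pat_step => /orP[Tk|/andP[zk1 _]].
  move: (Tk) => /andP[zk ik].
  have := rankS z k.+1 z0; have := rankS z k z0; rewrite zk.
  case: (z k.+1); lia.
have := rankS z k.+1 z0; rewrite zk1; lia.
Qed.
End Pattern.

Lemma rank_bound d z k : is_config d z -> (rank z k <= d)%N.
Proof.
move=> [z0 [N [zN rN]]].
have := rank_mono z (leq_maxl k N.+1).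
have -> : maxn k N.+1 = (N.+1 + (maxn k N.+1 - N.+1))%N by lia.
by rewrite rank_tail // rN.
Qed.

Lemma sep_init d z : is_config d z -> Sep z d.-1.
Proof.
move=> hz k zk zk1; have [z0 _] := hz.
have := @rank_bound d z k.+2 hz.
rewrite (rankS z k.+1) // (rankS z k) // zk zk1 /=; lia.
Qed.

Lemma ball_exists d z i : is_config d z -> (i < d)%N ->
  exists k, z k /\ rank z k = i.
Proof.
move=> [z0 [N [zN rN]]] id.
have HP : exists n, (i < rank z n)%N by exists N.+1; rewrite rN.
case: (ex_minnP HP) => m Pm minm.
case: m Pm minm => [|m]; first by rewrite rank0.
move=> Pm minm; exists m.
have hm : ~~ (i < rank z m)%N by apply/negP => /minm; lia.
move: Pm hm; rewrite rankS //; case: (z m) => /=; lia.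
Qed.

Lemma ball_unique z k k' : z 0 = false -> z k -> z k' -> rank z k = rank z k' -> k = k'.
Proof.
move=> z0 zk zk' e; apply/eqP; rewrite eqn_leq; apply/andP; split;
  rewrite leqNgt; apply/negP => lt.
  have := rank_mono z lt; rewrite rankS // zk' e; lia.
have := rank_mono z lt; rewrite rankS // zk e; lia.
Qed.

Lemma pos_spec d z i : is_config d z -> (i < d)%N ->
  z (pos z i) /\ rank z (pos z i) = i.
Proof.
move=> hz id; have [k [zk rk]] := @ball_exists d z i hz id.
have [z0 _] := hz.
rewrite /pos (@xget_unique _ _ _ k) //.
by move=> y [zy ry]; apply: (@ball_unique z y k z0 zy zk); rewrite ry rk.
Qed.

Lemma agp_of_sep d z : is_config d z -> Sep z 0 -> all_gaps_pos d z.
Proof.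
move=> hz hs; have [z0 _] := hz.
apply/forallP => -[i id] /=; rewrite /gap.
have id1 : (i.+1 < d)%N by lia.
have id0 : (i < d)%N by lia.
have [zp rp] := @pos_spec d z i hz id0.
have [zq rq] := @pos_spec d z i.+1 hz id1.
set p := pos z i in zp rp *; set q := pos z i.+1 in zq rq *.
have pq : (p < q)%N.
  rewrite ltnNge; apply/negP => /(rank_mono z); lia.
have : q != p.+1.
  apply/negP => /eqP qp; rewrite qp in zq.
  by have := hs p zp zq.
lia.
Qed.

Lemma traj_shift c z h s t :
  traj c z h (s + t) = traj c (traj c z h s) (fun u => h (s + u)%N) t.
Proof. by elim: t => [|t IH]; rewrite ?addn0 // addnS /= IH. Qed.

Lemma traj_dep c z h h' t : (forall u, (u < t)%N -> h u = h' u) ->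
  traj c z h t = traj c z h' t.
Proof.
elim: t => [//|t IH] e /=; rewrite IH ?e // => u ut; apply: e; lia.
Qed.

Lemma traj_config c z h d t : is_config d z -> is_config d (traj c z h t).
Proof. by move=> hz; elim: t => [//|t IH] /=; apply: step_config. Qed.

Lemma coins_ofE t d (h : {ffun 'I_t -> {ffun 'I_d -> bool}}) s r
  (hs : (s < t)%N) (hr : (r < d)%N) : coins_of h s r = h (Ordinal hs) (Ordinal hr).
Proof.
rewrite /coins_of (insubT (fun x => x < t)%N hs) (insubT (fun x => x < d)%N hr) /=.
by congr (h _ _); apply: val_inj.
Qed.

Definition hstar (d : nat) : {ffun 'I_d.-1 -> {ffun 'I_d -> bool}} :=
  [ffun s : 'I_d.-1 => [ffun r : 'I_d => (d.-1 - s <= r)%N]].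

Lemma hstar_agp c d z : below_cap c 0 -> is_config d z ->
  all_gaps_pos d (traj c z (coins_of (hstar d)) d.-1).
Proof.
move=> hc hz.
suff : forall s, (s <= d.-1)%N -> Sep (traj c z (coins_of (hstar d)) s) (d.-1 - s).
  by move=> /(_ d.-1 (leqnn _)); rewrite subnn; apply: agp_of_sep; apply: traj_config.
elim=> [|s IH] hs; first by rewrite subn0; apply: sep_init.
have hs' : (s < d.-1)%N by lia.
have hzs := @traj_config c z (coins_of (hstar d)) d s hz.
have [z0 _] := hzs.
rewrite /=.
have -> : (d.-1 - s.+1 = (d.-1 - s).-1)%N by lia.
apply: pat_sep => //; last by lia.
  by apply: IH; lia.
move=> k zk.
have rk : (rank (traj c z (coins_of (hstar d)) s) k < d)%N.
  have := @rank_bound d _ k.+1 hzs; rewrite rankS // zk; lia.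
by rewrite (@coins_ofE _ _ (hstar d) _ _ hs' rk) !ffunE.
Qed.

End M1.
Import M1.

Module M2.

Definition app (n : nat) (w1 w2 : nat -> nat -> bool) : nat -> nat -> bool :=
  fun s => if (s < n)%N then w1 s else w2 (s - n)%N.

Definition comb (X : Type) n m (h1 : {ffun 'I_n -> X}) (h2 : {ffun 'I_m -> X})
  : {ffun 'I_(n + m) -> X} :=
  [ffun i => match split i with inl j => h1 j | inr j => h2 j end].

Arguments comb {X n m}.

Lemma coins_ofF t d (h : {ffun 'I_t -> {ffun 'I_d -> bool}}) s r :
  ~~ ((s < t) && (r < d))%N -> coins_of h s r = false.
Proof.
rewrite negb_and => /orP[hs|hr]; rewrite /coins_of.
  by rewrite insubF //; apply/negbTE.
by case: insub => // ?; rewrite insubF //; apply/negbTE.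
Qed.

Lemma coins_comb d n m (h1 : {ffun 'I_n -> {ffun 'I_d -> bool}})
  (h2 : {ffun 'I_m -> {ffun 'I_d -> bool}}) :
  coins_of (@comb _ n m h1 h2) = app n (coins_of h1) (coins_of h2).
Proof.
apply/funext => s; apply/funext => r; rewrite /app.
case hr: (r < d)%N; last first.
  by rewrite coins_ofF ?hr ?andbF //; case: ifP => _; rewrite coins_ofF ?hr ?andbF.
case hs: (s < n + m)%N; last first.
  rewrite coins_ofF ?hs //; case: ifP => sn; rewrite coins_ofF //; lia.
rewrite (@coins_ofE _ _ _ _ _ hs hr) ffunE.
case: splitP => j /= ej.
  have sn : (s < n)%N by rewrite ej.
  rewrite sn (@coins_ofE _ _ _ _ _ sn hr); congr (h1 _ _); exact: val_inj.
have sn : ~~ (s < n)%N by rewrite ej; lia.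
rewrite (negbTE sn).
have sm : (s - n < m)%N by lia.
rewrite (@coins_ofE _ _ _ _ _ sm hr); congr (h2 _ _); apply: val_inj => /=; lia.
Qed.

Local Open Scope ring_scope.
Lemma sum_comb (R : nmodType) (X : finType) n m (F : {ffun 'I_(n + m) -> X} -> R) :
  \sum_h F h = \sum_(h1 : {ffun 'I_n -> X}) \sum_(h2 : {ffun 'I_m -> X}) F (@comb X n m h1 h2).
Proof.
rewrite pair_big /=.
rewrite (reindex (fun p : {ffun 'I_n -> X} * {ffun 'I_m -> X} => @comb X n m p.1 p.2)) //.
exists (fun h : {ffun 'I_(n + m) -> X} => ([ffun j => h (lshift m j)] : {ffun 'I_n -> X}, [ffun j => h (rshift n j)] : {ffun 'I_m -> X})).
  move=> [h1 h2] _; congr pair; apply/ffunP => j; rewrite !ffunE.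
    case: splitP => k /= ek; first by congr (h1 _); apply: val_inj.
    by have := ltn_ord j; rewrite ek; lia.
  case: splitP => k /= ek; first by have := ltn_ord k; rewrite -ek; lia.
  by congr (h2 _); apply: val_inj => /=; lia.
move=> h _; apply/ffunP => i; rewrite !ffunE.
by case: splitP => k ek; rewrite ffunE; congr (h _); apply: val_inj.
Qed.

Set Implicit Arguments. Unset Strict Implicit.
Section E.
Variables (R : realType) (eps : R) (d : nat).
Hypothesis e0 : 0 <= eps.
Hypothesis e1 : eps <= 1.

Definition E n (G : (nat -> nat -> bool) -> R) : R :=
  \sum_(h : {ffun 'I_n -> {ffun 'I_d -> bool}}) coin_weight eps h * G (coins_of h).

Lemma cw_ge0 n (h : {ffun 'I_n -> {ffun 'I_d -> bool}}) : 0 <= coin_weight eps h.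
Proof.
apply: prodr_ge0 => s _; apply: prodr_ge0 => r _; case: ifP => _ //; by rewrite subr_ge0.
Qed.

Lemma cw_comb n m (h1 : {ffun 'I_n -> {ffun 'I_d -> bool}}) (h2 : {ffun 'I_m -> {ffun 'I_d -> bool}}) :
  coin_weight eps (comb h1 h2) = coin_weight eps h1 * coin_weight eps h2.
Proof.
rewrite /coin_weight big_split_ord /=; congr (_ * _); apply: eq_bigr => i _; rewrite ffunE.
  case: splitP => j /= ej; last by have := ltn_ord i; rewrite ej; lia.
  by have -> : j = i by apply: val_inj.
case: splitP => j /= ej; first by have := ltn_ord j; rewrite -ej; lia.
by have -> : j = i by apply: val_inj => /=; lia.
Qed.

Lemma E_split n m G : E (n + m) G = E n (fun w1 => E m (fun w2 => G (app n w1 w2))).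
Proof.
rewrite /E sum_comb; apply: eq_bigr => h1 _; rewrite mulr_sumr; apply: eq_bigr => h2 _.
by rewrite cw_comb coins_comb mulrA.
Qed.

Lemma E_one n : E n (fun _ => 1) = 1.
Proof.
rewrite /E; under eq_bigr do rewrite mulr1.
rewrite /coin_weight -(bigA_distr_bigA (fun (s : 'I_n) (x : {ffun 'I_d -> bool}) =>
   \prod_(r < d) (if x r then 1 - eps else eps))).
apply: big1 => s _.
rewrite -(bigA_distr_bigA (fun (r : 'I_d) (b : bool) => if b then 1 - eps else eps)).
by apply: big1 => r _; rewrite big_bool /=; lra.
Qed.

Lemma E_ge0 n G : (forall w, 0 <= G w) -> 0 <= E n G.
Proof. by move=> hG; apply: sumr_ge0 => h _; apply: mulr_ge0 => //; apply: cw_ge0. Qed.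

Lemma E_le n G G' : (forall w, G w <= G' w) -> E n G <= E n G'.
Proof. by move=> hG; apply: ler_sum => h _; apply: ler_wpM2l => //; apply: cw_ge0. Qed.

Lemma E_scale n a G : E n (fun w => a * G w) = a * E n G.
Proof. by rewrite /E mulr_sumr; apply: eq_bigr => h _; rewrite mulrCA. Qed.

Lemma E_ext n G G' : (forall w, G w = G' w) -> E n G = E n G'.
Proof. by move=> e; apply: eq_bigr => h _; rewrite e. Qed.

Lemma E_add n G G' : E n (fun w => G w + G' w) = E n G + E n G'.
Proof. by rewrite /E -big_split; apply: eq_bigr => h _; rewrite mulrDr. Qed.

Lemma E_point n G (h0 : {ffun 'I_n -> {ffun 'I_d -> bool}}) : (forall w, 0 <= G w) ->
  coin_weight eps h0 * G (coins_of h0) <= E n G.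
Proof.
move=> hG; rewrite /E (bigD1 h0) //= lerDl.
by apply: sumr_ge0 => h _; apply: mulr_ge0 => //; apply: cw_ge0.
Qed.
End E.
Arguments E_ext {R eps d n G G'}.
Arguments E_scale {R eps d n} a G.
Arguments E_one {R eps d n}.
Arguments E_add {R eps d n} G G'.
Arguments E_split {R eps d} e0 e1 n m G.
Arguments E_le {R eps d} e0 e1 {n G G'}.
Arguments E_ge0 {R eps d} e0 e1 {n G}.
Arguments E_point {R eps d} e0 e1 {n G} h0.
Arguments cw_ge0 {R eps d} e0 e1 {n} h.

End M2.
Import M2.

Module M3.
Local Open Scope ring_scope.

Lemma forall_iota t (P : nat -> bool) : [forall s : 'I_t, P s] = all P (iota 0 t).
Proof.
apply/forallP/allP => H.
  by move=> s; rewrite mem_iota => /andP[_ st]; exact: (H (Ordinal st)).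
by move=> s; apply: H; rewrite mem_iota /=.
Qed.

Section Main.
Variables (R : realType) (eps : R) (d : nat) (c : option nat) (z0 : nat -> bool).
Hypothesis e0 : 0 < eps.
Hypothesis e1 : eps < 1.
Hypothesis hd : (2 <= d)%N.
Hypothesis hc : below_cap c 0.
Hypothesis hz : is_config d z0.

Let e0' : 0 <= eps. Proof. exact: ltW. Qed.
Let e1' : eps <= 1. Proof. exact: ltW. Qed.

Definition agpw (w : nat -> nat -> bool) s := all_gaps_pos d (traj c z0 w s).
Definition NA t w : bool := all (fun s => ~~ agpw w s) (iota 0 t.+1).
Definition A t := E eps d t (fun w => (NA t w)%:R).
Definition Pg t := prob_gamma eps d c z0 t.

Lemma Pg_E t : Pg t = E eps d t (fun w => (gamma_event d c z0 w t)%:R).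
Proof. by []. Qed.

Lemma E_const n a : E eps d n (fun _ => a) = a.
Proof.
rewrite (E_ext (G' := (fun _ => a * 1))); last by move=> w; rewrite mulr1.
by rewrite E_scale E_one ?mulr1.
Qed.

Lemma ge_NA t w : (gamma_event d c z0 w t.+1)%:R + (NA t.+1 w)%:R = (NA t w)%:R :> R.
Proof.
rewrite /gamma_event (forall_iota _ (fun s => ~~ agpw w s)) /NA.
rewrite -[(t.+2)%N]addn1 iotaD all_cat /= andbT.
rewrite add0n -/(agpw w t.+1); case: (~~ agpw w 0 && _); case: (agpw w t.+1); by rewrite /= ?addr0 ?add0r.
Qed.

Lemma ge_NA0 w : (gamma_event d c z0 w 0)%:R + (NA 0 w)%:R = 1 :> R.
Proof.
rewrite /gamma_event /NA /= andbT.
have -> : [forall s : 'I_0, ~~ all_gaps_pos d (traj c z0 w s)] = true.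
  by apply/forallP => -[].
by rewrite /agpw /=; case: (all_gaps_pos _ _); rewrite /= ?addr0 ?add0r.
Qed.

Lemma NA_dep t w1 w2 : NA t (app t w1 w2) = NA t w1.
Proof.
apply: eq_in_all => s; rewrite mem_iota add0n => /andP[_ st].
rewrite /agpw (@traj_dep c z0 (app t w1 w2) w1) // => u us.
by rewrite /app; have -> : (u < t)%N by lia.
Qed.

Lemma Pg_ge0 t : 0 <= Pg t.
Proof. by rewrite Pg_E; apply: E_ge0 => // w; apply: ler0n. Qed.

Lemma A_ge0 t : 0 <= A t.
Proof. by apply: E_ge0 => // w; apply: ler0n. Qed.

Lemma A_0 : Pg 0 + A 0 = 1.
Proof.
by rewrite Pg_E /A -E_add (E_ext (G' := (fun _ => 1))) ?E_one // => w; rewrite ge_NA0.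
Qed.

Lemma A_step t : Pg t.+1 + A t.+1 = A t.
Proof.
rewrite Pg_E /A -E_add (E_ext (G' := (fun w => (NA t w)%:R))); last first.
  by move=> w; rewrite ge_NA.
transitivity (E eps d (t + 1) (fun w => (NA t w)%:R)); first by rewrite addn1.
rewrite (E_split e0' e1'); apply: E_ext => w1.
by rewrite (E_ext (G' := (fun _ => (NA t w1)%:R))) ?E_const // => w2; rewrite NA_dep.
Qed.

Lemma A_le0 : A 0 <= 1.
Proof. have := A_0; have := Pg_ge0 0; lra. Qed.

Lemma A_anti s t : (s <= t)%N -> A t <= A s.
Proof.
move=> st; rewrite -(subnKC st); elim: (t - s)%N => [|k IH]; first by rewrite addn0.
apply: le_trans IH; rewrite addnS; have := A_step (s + k); have := Pg_ge0 (s + k).+1; lra.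
Qed.

Definition q := coin_weight eps (hstar d).
Let L := d.-1.

Lemma q_gt0 : 0 < q.
Proof.
apply: prodr_gt0 => s _; apply: prodr_gt0 => r _; case: ifP => _ //.
by rewrite subr_gt0.
Qed.

Lemma agp_E (z : nat -> bool) : is_config d z ->
  q <= E eps d L (fun w2 => (all_gaps_pos d (traj c z w2 L))%:R).
Proof.
move=> hz'.
have := E_point e0' e1' (G := fun w2 => (all_gaps_pos d (traj c z w2 L))%:R) (hstar d).
by rewrite /= hstar_agp // mulr1; apply => w; apply: ler0n.
Qed.

Lemma q_le1 : q <= 1.
Proof.
apply: le_trans (@agp_E z0 hz) _.
apply: le_trans (_ : _ <= E eps d L (fun _ => 1)) _; last by rewrite E_one.
by apply: E_le => // w; case: (all_gaps_pos _ _); rewrite /= ?ler01 ?lexx.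
Qed.

Lemma nagp_E (z : nat -> bool) : is_config d z ->
  E eps d L (fun w2 => (~~ all_gaps_pos d (traj c z w2 L))%:R) <= 1 - q.
Proof.
move=> hz'.
have h1 : E eps d L (fun w2 => (~~ all_gaps_pos d (traj c z w2 L))%:R)
        + E eps d L (fun w2 => (all_gaps_pos d (traj c z w2 L))%:R) = 1.
  rewrite -E_add (E_ext (G' := fun _ => 1)) ?E_one // => w.
  by case: (all_gaps_pos _ _); rewrite /= ?addr0 ?add0r.
have := @agp_E z hz'; lra.
Qed.

Lemma NA_split t v : NA (t + L) v ->
  NA t v && ~~ all_gaps_pos d (traj c z0 v (t + L)).
Proof.
move/allP => H; apply/andP; split.
  apply/allP => s; rewrite mem_iota add0n => /andP[_ st]; apply: H.
  by rewrite mem_iota add0n; lia.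
by have := H (t + L)%N; rewrite mem_iota add0n => ->; lia.
Qed.

Lemma A_contract t : A (t + L) <= (1 - q) * A t.
Proof.
rewrite /A (E_split e0' e1') -E_scale; apply: E_le => // w1.
set z' := traj c z0 w1 t.
have hz' : is_config d z' by apply: traj_config.
apply: le_trans (_ : E eps d L (fun w2 => (NA t w1)%:R *
     (~~ all_gaps_pos d (traj c z' w2 L))%:R) <= _).
  apply: E_le => // w2.
  case hN: (NA (t + L) _); last by rewrite mulr_ge0 ?ler0n.
  have /andP[h1 h2] := NA_split t _ hN.
  rewrite NA_dep in h1; rewrite h1 /= mul1r.
  have e' : traj c z0 (app t w1 w2) t = z'.
    by apply: traj_dep => u ut; rewrite /app ut.
  have e2 : traj c z' (fun u => app t w1 w2 (t + u)%N) L = traj c z' w2 L.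
    by apply: traj_dep => u _; rewrite /app ltnNge leq_addr /= addKn.
  by rewrite traj_shift e' e2 in h2; rewrite h2.
rewrite E_scale mulrC; apply: ler_wpM2r; first by apply: ler0n.
exact: nagp_E.
Qed.

Definition rho := 1 - q.

Lemma rho_ge0 : 0 <= rho.
Proof. by rewrite /rho subr_ge0 q_le1. Qed.

Lemma A_geom k : A (k * L) <= rho ^+ k.
Proof.
elim: k => [|k IH]; first by rewrite mul0n expr0 A_le0.
rewrite mulSnr exprS; apply: le_trans (A_contract _) _.
by apply: ler_wpM2l => //; apply: rho_ge0.
Qed.

Lemma L_ge1 : (1 <= L)%N.
Proof. rewrite /L; lia. Qed.

Lemma A_ge0' t : 0 <= A t.
Proof. exact: A_ge0. Qed.

Lemma sum_A_block n : q * \sum_(0 <= s < n * L) A s <= L%:R * (1 - rho ^+ n).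
Proof.
elim: n => [|n IH]; first by rewrite mul0n big_geq // expr0 subrr mulr0 mulr0.
rewrite mulSnr (@big_cat_nat _ _ _ (n * L)) //= ?leq_addr //.
have hb : \sum_(n * L <= s < n * L + L) A s <= L%:R * rho ^+ n.
  apply: le_trans (_ : \sum_(n * L <= s < n * L + L) A (n * L)%N <= _).
    apply: ler_sum_nat => s /andP[hs _]; exact: A_anti.
  rewrite sumr_const_nat addKn -[X in X <= _]mulr_natl; apply: ler_wpM2l; first exact: ler0n.
  exact: A_geom.
have hqb : q * \sum_(n * L <= s < n * L + L) A s <= q * (L%:R * rho ^+ n).
  by apply: ler_wpM2l => //; apply: ltW; apply: q_gt0.
have q0 := q_gt0; rewrite exprS /rho in hqb IH *.
move: hqb IH; set S := \sum_(_ <= _ < _ * _) _; set B := \sum_(_ <= _ < _) _.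
set X := (1 - q) ^+ n; move=> *; nra.
Qed.

Lemma sum_A_bound n : q * \sum_(0 <= s < n) A s <= L%:R.
Proof.
have q0 := q_gt0.
apply: le_trans (_ : q * \sum_(0 <= s < n * L) A s <= _).
  apply: ler_wpM2l; first exact: ltW.
  have hn : (n <= n * L)%N by have := L_ge1; rewrite -{1}(muln1 n) => ?; apply: leq_mul.
  rewrite (@big_cat_nat _ _ _ n 0 (n * L)) //= lerDl.
  by apply: sumr_ge0 => s _; apply: A_ge0.
apply: le_trans (sum_A_block n) _.
have := exprn_ge0 n rho_ge0; have : 0 <= L%:R :> R by apply: ler0n.
move=> *; nra.
Qed.

Lemma abel n : \sum_(0 <= t < n.+1) t%:R * Pg t + n%:R * A n = \sum_(0 <= s < n) A s.
Proof.
elim: n => [|n IH]; first by rewrite big_nat1 big_geq // !mul0r addr0.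
rewrite big_nat_recr //= [in RHS]big_nat_recr //= -IH -natr1.
have := A_step n; move=> h; rewrite -h; ring.
Qed.

Lemma tP_bound n : q * \sum_(0 <= t < n) t%:R * Pg t <= L%:R.
Proof.
have q0 := q_gt0.
case: n => [|n]; first by rewrite big_geq // mulr0 ler0n.
apply: le_trans (sum_A_bound n); apply: ler_wpM2l; first exact: ltW.
rewrite -abel lerDl; apply: mulr_ge0; [exact: ler0n|exact: A_ge0].
Qed.

Lemma Psum n : \sum_(0 <= t < n.+1) Pg t + A n = 1.
Proof.
elim: n => [|n IH]; first by rewrite big_nat1 A_0.
by rewrite big_nat_recr //= -addrA A_step.
Qed.

Lemma Psum_le1 n : \sum_(0 <= t < n) Pg t <= 1.
Proof.
case: n => [|n]; first by rewrite big_geq // ler01.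
have := Psum n; have := A_ge0 n; lra.
Qed.

Lemma A_small e : 0 < e -> exists n, A n <= e.
Proof.
move=> e0''; have q0 := q_gt0.
have hx : 0 <= L%:R / (q * e) by apply: divr_ge0; [exact: ler0n|apply: mulr_ge0; exact: ltW].
have := archi_boundP hx; set N := Num.Def.archi_bound _ => hN.
exists N.
have h1 : q * N.+1%:R * A N <= L%:R.
  apply: le_trans (sum_A_bound N.+1); rewrite -mulrA; apply: ler_wpM2l; first exact: ltW.
  apply: le_trans (_ : \sum_(0 <= s < N.+1) A N <= _).
    by rewrite sumr_const_nat subn0 mulr_natl.
  apply: ler_sum_nat => s /andP[_ sN]; apply: A_anti; lia.
have h2 : L%:R < q * e * N.+1%:R.
  rewrite ltr_pdivrMr in hN; last by apply: mulr_gt0.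
  apply: lt_le_trans hN _; rewrite mulrC ler_wpM2l ?ler_nat ?leqnSn //.
  by apply: mulr_ge0; exact: ltW.
have h3 : 0 < q * N.+1%:R by apply: mulr_gt0 => //; rewrite ltr0n.
rewrite -(ler_pM2l h3); apply: le_trans h1 _; apply: ltW; move: h2.
by rewrite mulrAC.
Qed.
End Main.

End M3.
Import M3.

Lemma ser_le (R : realType) (u : nat -> R) (B : R) : (forall n, (0 <= u n)%R) ->
  (forall n, (\sum_(0 <= t < n) u t <= B)%R) ->
  (\sum_(0 <= t <oo) (u t)%:E <= B%:E)%E.
Proof.
move=> u0 uB; apply: ereal_normedtype.lime_le.
  by apply: is_cvg_nneseries => n _ _; rewrite lee_fin.
by apply: nearW => n; rewrite sumEFin lee_fin.
Qed.

Theorem lemma5p1 (R : realType) (d : nat) (hd : (2 <= d)%N)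
  (eps : R) (heps : (0 < eps)%R /\ (eps < 1)%R)
  (c : option nat) (hc : forall n, c = Some n -> (1 <= n)%N)
  (x : 'I_d.-1 -> nat) (zeta0 : nat -> bool)
  (hz : is_config d zeta0) (hx : forall i : 'I_d.-1, gap zeta0 i = x i) :
  (expect_gamma eps d c zeta0 < +oo)%E.
Proof.
case: heps => e0 e1.
have hc0 : below_cap c 0 by case: c hc => [n|] //= /(_ n erefl).
have q0 := @q_gt0 R eps d e0 e1.
have S2 : (\sum_(0 <= t <oo) (prob_gamma eps d c zeta0 t)%:E = 1)%E.
  apply/eqP; rewrite eq_le; apply/andP; split.
    apply: ser_le => n; first exact: (@Pg_ge0 R eps d c zeta0 e0 e1).
    exact: (@Psum_le1 R eps d c zeta0 e0 e1 hd hc0).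
  apply/lee_addgt0Pr => e e0'.
  have [n hn] := @A_small R eps d c zeta0 e0 e1 hd hc0 hz e e0'.
  apply: le_trans (_ : (\sum_(0 <= t < n.+1) (prob_gamma eps d c zeta0 t)%:E + e%:E <= _)%E).
    rewrite sumEFin -EFinD lee_fin.
    have := @Psum R eps d c zeta0 e0 e1 hd hc0 n; rewrite /Pg => h.
    by rewrite -h lerD2l.
  rewrite leeD2r //; apply: nneseries_lim_ge => k _ _.
  by rewrite lee_fin; apply: (@Pg_ge0 R eps d c zeta0 e0 e1).
rewrite /expect_gamma S2 subee // mule0 adde0.
apply: le_lt_trans (_ : _ <= ((d.-1)%:R / @q R eps d)%:E)%E _; last exact: ltry.
apply: ser_le => n.
  by apply: mulr_ge0; [exact: ler0n|exact: (@Pg_ge0 R eps d c zeta0 e0 e1)].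
rewrite ler_pdivlMr // mulrC.
exact: (@tP_bound R eps d c zeta0 e0 e1 hd hc0 hz n).
Qed.
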